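(* Let $C=\begin{pmatrix}1&-2\\2&-1\end{pmatrix}$, let $n\ge 3$ be an odd integer, and put $\omega=e^{2\pi i/n}$, $\xi=e^{\pi i/3}$, $\eta=e^{\pi i/(2n)}$. For $0\le j,k\le n-1$ define $$X_{n,j,k}=\frac{(-1)^{(n+1)/2}}{i}\begin{pmatrix}-\xi^{-1}\eta\,\omega^{j}+\xi\,\eta^{-1}\omega^{k} & \eta\,\omega^{j}-\eta^{-1}\omega^{k}\\ -\eta\,\omega^{j}+\eta^{-1}\omega^{k} & \xi\,\eta\,\omega^{j}-\xi^{-1}\eta^{-1}\omega^{k}\end{pmatrix}.$$ Then the set of complex $2\times 2$ matrices $X$ satisfying $X^n=C^n$ is exactly $\{X_{n,j,k}:0\le j,k\le n-1\}$, and these $n^2$ matrices are pairwise distinct; in particular $X^n=C^n$ has exactly $n^2$ solutions.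
   Context: $i$ denotes the imaginary unit; all matrices have complex entries. *)

(* Defs.v *)
From HB Require Import structures.
From mathcomp Require Import all_boot all_order all_algebra.
From mathcomp Require Import all_classical all_reals all_analysis.
From mathcomp Require Import complex.
Set Implicit Arguments. Unset Strict Implicit. Unset Printing Implicit Defensive.
Import Order.TTheory GRing.Theory Num.Theory.
Local Open Scope ring_scope.
Local Open Scope complex_scope.

Definition expi (R : realType) (t : R) : R[i] := (cos t +i* sin t).

Definition Cmat (R : realType) : 'M[R[i]]_2 :=
  \matrix_(r < 2, c < 2)
    (if (val r == 0%N) then (if val c == 0%N then 1 else -2)
     else (if val c == 0%N then 2 else -1)).

Definition omega (R : realType) (n : nat) : R[i] := expi (2 * pi / n%:R).
Definition xi (R : realType) : R[i] := expi (pi / 3).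
Definition eta (R : realType) (n : nat) : R[i] := expi (pi / (2 * n%:R)).

Definition Xmat (R : realType) (n j k : nat) : 'M[R[i]]_2 :=
  let w := @omega R n in let x := @xi R in let e := @eta R n in
  let a := e * w ^+ j in let b := e^-1 * w ^+ k in
  ((-1) ^+ ((n + 1) %/ 2) / 'i) *:
  \matrix_(r < 2, c < 2)
    (if (val r == 0%N) then
       (if val c == 0%N then - x^-1 * a + x * b else a - b)
     else
       (if val c == 0%N then - a + b else x * a - x^-1 * b)).

(* Main.v *)
Require Import Defs.
From HB Require Import structures.
From mathcomp Require Import all_boot all_order all_algebra.
From mathcomp Require Import all_classical all_reals all_analysis.
From mathcomp Require Import complex.
From mathcomp Require Import ring lra.
Import Order.TTheory GRing.Theory Num.Theory.
Local Open Scope ring_scope.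
Local Open Scope complex_scope.

Section Alg.
Variables (K : fieldType) (x : K).
Hypotheses (hx0 : x != 0) (hx1 : x + x^-1 = 1) (hd : x - x^-1 != 0) (h2 : (2:K) != 0).

Definition mA : 'M[K]_2 := \matrix_(r < 2, c < 2)
  (if val r == 0%N then (if val c == 0%N then - x^-1 else 1) else (if val c == 0%N then -1 else x)).
Definition mB : 'M[K]_2 := \matrix_(r < 2, c < 2)
  (if val r == 0%N then (if val c == 0%N then x else -1) else (if val c == 0%N then 1 else - x^-1)).
Definition mC : 'M[K]_2 := \matrix_(r < 2, c < 2)
  (if val r == 0%N then (if val c == 0%N then 1 else -2) else (if val c == 0%N then 2 else -1)).
Let d := x - x^-1.
Definition mE := locked (d^-1 *: mA).
Definition mF := locked (d^-1 *: mB).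
Lemma mEdef : mE = d^-1 *: mA. Proof. by rewrite /mE; unlock. Qed.
Lemma mFdef : mF = d^-1 *: mB. Proof. by rewrite /mF; unlock. Qed.

Lemma ord2P (i : 'I_2) : i = 0 \/ i = 1.
Proof. by case: i => [[|[|//]]] ?; [left|right]; apply/val_inj. Qed.
Lemma lift01 : lift ord0 (ord0 : 'I_1) = 1 :> 'I_2.
Proof. exact/val_inj. Qed.
Lemma ord0E : ord0 = 0 :> 'I_2.
Proof. exact/val_inj. Qed.

Ltac ent := apply/matrixP; let i := fresh "i" in let j := fresh "j" in intros i j;
  case: (ord2P i) => ->; case: (ord2P j) => ->;
  rewrite /mA /mB /mC !(mxE, big_ord_recl, big_ord0, addr0, lift01, ord0E) /=.

Lemma AA : mA *m mA = d *: mA.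
Proof. by ent; rewrite /d; field. Qed.
Lemma BB : mB *m mB = d *: mB.
Proof. by ent; rewrite /d; field. Qed.
Lemma AB : mA *m mB = 0.
Proof. by ent; field. Qed.
Lemma BA : mB *m mA = 0.
Proof. by ent; field. Qed.
Lemma ApB : mA + mB = d%:M.
Proof. by ent; rewrite /d; ring. Qed.
Lemma CBA : mC = mB - mA.
Proof. ent; rewrite -?hx1; ring. Qed.
Definition cA (M : 'M[K]_2) := - x^-1 * (M 0 0 + M 0 1 * x) + (M 1 0 + M 1 1 * x).
Definition cB (M : 'M[K]_2) := x * (M 0 0 + M 0 1 * x^-1) - (M 1 0 + M 1 1 * x^-1).
Lemma AMA M : mA *m M *m mA = cA M *: mA.
Proof. by ent; rewrite /cA; field. Qed.
Lemma BMB M : mB *m M *m mB = cB M *: mB.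
Proof. by ent; rewrite /cB; field. Qed.

Local Notation E := mE.
Local Notation F := mF.
Lemma dn0 : d != 0. Proof. exact: hd. Qed.

Lemma EE : E * E = E.
Proof.
rewrite mEdef -scalerAl -scalerAr scalerA -mulmxE AA scalerA; congr (_ *: _).
by field; apply: dn0.
Qed.
Lemma FF : F * F = F.
Proof.
rewrite mFdef -scalerAl -scalerAr scalerA -mulmxE BB scalerA; congr (_ *: _).
by field; apply: dn0.
Qed.
Lemma EF : E * F = 0.
Proof. by rewrite mEdef mFdef -scalerAl -scalerAr -mulmxE AB !scaler0. Qed.
Lemma FE : F * E = 0.
Proof. by rewrite mEdef mFdef -scalerAl -scalerAr -mulmxE BA !scaler0. Qed.
Lemma EpF : E + F = 1.
Proof.
rewrite mEdef mFdef -scalerDr ApB -scalemx1 scalerA mulVf ?scale1r //; exact: dn0.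
Qed.
Lemma Cd : mC = d *: (F - E).
Proof. by rewrite CBA mEdef mFdef -scalerBr scalerA mulfV ?scale1r //; exact: dn0. Qed.

Lemma mulEF a b a' b' :
  (a *: E + b *: F) * (a' *: E + b' *: F) = (a * a') *: E + (b * b') *: F.
Proof.
rewrite mulrDl !mulrDr -!scalerAl -!scalerAr EE EF FE FF !scaler0 addr0 add0r.
by rewrite !scalerA.
Qed.

Lemma powEF a b n :
  (a *: E + b *: F) ^+ n.+1 = (a ^+ n.+1) *: E + (b ^+ n.+1) *: F.
Proof.
elim: n => [|n IH]; first by rewrite !expr1.
by rewrite exprS IH mulEF -!exprS.
Qed.

Lemma EM a b : E * (a *: E + b *: F) = a *: E.
Proof. by rewrite mulrDr -!scalerAr EE EF scaler0 addr0. Qed.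
Lemma FM a b : F * (a *: E + b *: F) = b *: F.
Proof. by rewrite mulrDr -!scalerAr FE FF scaler0 add0r. Qed.

Lemma scaleE_inj a a' : a *: E = a' *: E -> a = a'.
Proof.
move/(congr1 (fun M : 'M[K]_2 => M 0 1)); rewrite mEdef /mA !mxE /= !mulr1.
by apply: mulIf; rewrite invr_eq0; exact: dn0.
Qed.
Lemma scaleF_inj a a' : a *: F = a' *: F -> a = a'.
Proof.
move/(congr1 (fun M : 'M[K]_2 => M 0 1)); rewrite mFdef /mB !mxE /= !mulrN1 => /eqP.
move=> /eqP; apply: mulIf; rewrite oppr_eq0 invr_eq0; exact: dn0.
Qed.

Lemma EF_inj a b a' b' : a *: E + b *: F = a' *: E + b' *: F -> a = a' /\ b = b'.
Proof.
move=> h; split.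
  by apply: scaleE_inj; rewrite -(EM a b) -(EM a' b') h.
by apply: scaleF_inj; rewrite -(FM a b) -(FM a' b') h.
Qed.

Lemma Cpow n : odd n -> mC ^+ n = (d ^+ n / d) *: mC.
Proof.
case: n => [//|m] hodd.
have hc : mC = (- d) *: E + d *: F by rewrite Cd scalerBr scaleNr addrC.
rewrite {1}hc powEF exprNn -signr_odd hodd expr1 mulN1r hc scalerDr !scalerA.
congr (_ *: _ + _ *: _); first by rewrite mulrN divfK // dn0.
by rewrite divfK // dn0.
Qed.

Lemma comm_scale k (X : 'M[K]_2) : k != 0 -> X * (k *: mC) = (k *: mC) * X ->
  X * mC = mC * X.
Proof.
move=> hk h; move/(congr1 (fun M => k^-1 *: M)): h.
by rewrite -scalerAr -scalerAl !scalerA mulVf // !scale1r.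
Qed.

Lemma comm_decomp (X : 'M[K]_2) : X * mC = mC * X ->
  X = (cA X / d) *: E + (cB X / d) *: F.
Proof.
rewrite Cd -scalerAl -scalerAr => /(congr1 (fun M => d^-1 *: M)).
rewrite !scalerA mulVf ?scale1r; last exact: dn0.
move=> hc.
have PF : (F - E) * F = F by rewrite mulrBl FF EF subr0.
have EP : E * (F - E) = - E by rewrite mulrBr EF EE sub0r.
have PE : (F - E) * E = - E by rewrite mulrBl FE EE sub0r.
have FP : F * (F - E) = F by rewrite mulrBr FE FF subr0.
have two0 (Y : 'M[K]_2) : Y = - Y -> Y = 0.
  move/eqP; rewrite -subr_eq0 opprK -mulr2n -scaler_nat scaler_eq0 => /orP[|/eqP //].
  by move=> /eqP h; case/eqP: h2; exact: h.
have EXF : E * X * F = 0.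
  apply: two0; rewrite -{1}PF !mulrA -(mulrA E X) hc !mulrA EP.
  by rewrite !mulNr.
have FXE : F * X * E = 0.
  apply: two0; rewrite -{1}FP -(mulrA F (F - E) X) -hc !mulrA -(mulrA (F * X) (F - E) E) PE.
  by rewrite mulrN.
have hEXE : E * X * E = (cA X / d) *: E.
  rewrite mEdef -!scalerAl -!scalerAr !scalerA -mulmxE AMA scalerA; congr (_ *: _).
  by rewrite mulrC mulrA.
have hFXF : F * X * F = (cB X / d) *: F.
  rewrite mFdef -!scalerAl -!scalerAr !scalerA -mulmxE BMB scalerA; congr (_ *: _).
  by rewrite mulrC mulrA.
transitivity ((E + F) * X * (E + F)); first by rewrite EpF mul1r mulr1.
by rewrite [(E + F) * X]mulrDl [_ * (E + F)]mulrDr [(_ + _) * E]mulrDl [(_ + _) * F]mulrDl EXF FXE addr0 add0r hEXE hFXF.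
Qed.
End Alg.

Section Cx.
Variable R : realType.
Lemma i0 : 'i != 0 :> R[i].
Proof. by rewrite eq_complex /= oner_eq0 andbF. Qed.
Lemma two0 : 2 != 0 :> R[i].
Proof. by rewrite pnatr_eq0. Qed.
Lemma three0 : 3 != 0 :> R[i].
Proof. by rewrite pnatr_eq0. Qed.
Lemma iinv : 'i^-1 = - 'i :> R[i].
Proof.
apply: (@mulfI _ 'i); first exact: i0.
by rewrite mulfV ?i0 // mulrN -expr2 sqr_i opprK.
Qed.
Lemma pi3 : (pi : R) / 3 *+ 3 = pi.
Proof. by rewrite -mulr_natr divfK // pnatr_eq0. Qed.
Lemma expiD (s t : R) : expi (s + t) = expi s * expi t.
Proof.
rewrite /expi -[(_ +i* _) * (_ +i* _)]/(_ +i* _) sinD cosD.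
by congr (_ +i* _); ring.
Qed.

Lemma expi0 : expi (0:R) = 1.
Proof. by rewrite /expi cos0 sin0. Qed.

Lemma expiX (t : R) n : expi t ^+ n = expi (t *+ n).
Proof.
elim: n => [|n IH]; first by rewrite expr0 mulr0n expi0.
by rewrite exprS IH mulrS expiD.
Qed.

Lemma expipi : expi (pi : R) = -1.
Proof. by rewrite /expi cospi sinpi; apply/eqP; rewrite eq_complex /= oppr0 !eqxx. Qed.

Lemma expipihalf : expi (pi / 2 : R) = 'i.
Proof. by rewrite /expi cos_pihalf sin_pihalf. Qed.

Lemma expi2pi : expi (pi *+ 2 : R) = 1.
Proof. by rewrite /expi cos2pi sin2pi. Qed.

Lemma xi3 : xi R ^+ 3 = -1.
Proof. by rewrite /xi expiX pi3 expipi. Qed.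
Lemma xiN1 : xi R != -1.
Proof.
rewrite /xi /expi eq_complex /= negb_and; apply/orP; left.
have hc : 0 < cos (pi / 3 : R).
  apply: cos_gt0_pihalf; have := @pi_gt0 R => hp; apply/andP; split; lra.
by apply: contraTneq hc => ->; rewrite ltNge negbK lerN10.
Qed.
Lemma xi0 : xi R != 0.
Proof. by apply/eqP => h; move: (@xi3); rewrite h exprS mul0r => /eqP; rewrite eq_sym oppr_eq0 oner_eq0. Qed.
Lemma xiq : xi R ^+ 2 - xi R + 1 = 0.
Proof.
have h : (xi R + 1) * (xi R ^+ 2 - xi R + 1) = 0.
  have -> : (xi R + 1) * (xi R ^+ 2 - xi R + 1) = xi R ^+ 3 + 1 by ring.
  by rewrite xi3 addNr.
move/eqP: h; rewrite mulf_eq0 => /orP[|/eqP //].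
by rewrite addr_eq0 (negbTE xiN1).
Qed.
Lemma xi1 : xi R + (xi R)^-1 = 1.
Proof.
apply/eqP; rewrite -subr_eq0; apply/eqP; apply: (mulfI xi0); rewrite mulr0 -xiq.
by field; exact: xi0.
Qed.
Lemma xid : xi R - (xi R)^-1 != 0.
Proof.
have -> : xi R - (xi R)^-1 = 2 * xi R - 1.
  have hinv : (xi R)^-1 = 1 - xi R by rewrite -xi1 addrC addKr.
  by rewrite hinv; ring.
apply/eqP => h.
have : (2 * xi R - 1) ^+ 2 = 0 by rewrite h expr0n.
rewrite (_ : _ ^+ 2 = 4 * (xi R ^+ 2 - xi R + 1) - 3); last by ring.
rewrite xiq mulr0 sub0r => /eqP; rewrite oppr_eq0; apply/negP; exact: three0.
Qed.

Lemma expi_neq0 (t : R) : expi t != 0.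
Proof.
apply/eqP => h; have := cos2Dsin2 t.
by move: h; rewrite /expi => /eqP; rewrite eq_complex /= => /andP[/eqP -> /eqP ->]; rewrite expr0n /= addr0 => /eqP; rewrite eq_sym oner_eq0.
Qed.

Lemma sgn_pow n : odd n -> ((-1) ^+ ((n + 1) %/ 2) / 'i : R[i]) ^+ n = 'i.
Proof.
move=> hodd.
have [m hm] : exists m, n = m.*2.+1.
  by exists n./2; rewrite -{1}(odd_double_half n) hodd.
have -> : ((n + 1) %/ 2 = m.+1)%N by rewrite hm addn1 -doubleS -muln2 mulnK.
have hs : (-1) ^+ m.+1 / 'i = (-1) ^+ m * 'i :> R[i].
  by rewrite exprS iinv; ring.
have hi : 'i ^+ (m.*2.+1) = (-1) ^+ m * 'i :> R[i].
  by rewrite exprS -muln2 mulnC exprM sqr_i mulrC.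
rewrite hm hs exprMn hi -exprM mulrA -exprD -signr_odd oddD oddM /= odd_double.
by case: (odd m); rewrite /= mul1r.
Qed.
Variable n : nat.
Hypothesis hn : (0 < n)%N.
Lemma nR0 : n%:R != 0 :> R.
Proof. by rewrite pnatr_eq0 -lt0n. Qed.

Lemma omegan : omega R n ^+ n = 1.
Proof.
rewrite /omega expiX -expi2pi; congr expi.
by rewrite -mulr_natr mulr2n; field; exact: nR0.
Qed.
Lemma etan : Defs.eta R n ^+ n = 'i.
Proof.
rewrite /Defs.eta expiX -expipihalf; congr expi.
by rewrite -mulr_natr; field; exact: nR0.
Qed.

Lemma omega_ne1 j : (0 < j < n)%N -> omega R n ^+ j != 1.
Proof.
move=> /andP[j0 jn].
set u : R := pi * j%:R / n%:R.
have hu : (0 < u < pi).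
  have hp := @pi_gt0 R.
  have hj : (0 : R) < j%:R by rewrite ltr0n.
  have hN : (0 : R) < n%:R by rewrite ltr0n.
  have hjn : (j%:R : R) < n%:R by rewrite ltr_nat.
  apply/andP; split.
    by rewrite /u divr_gt0 // mulr_gt0.
  by rewrite /u ltr_pdivrMr // ltr_pM2l.
have hju : 2 * pi / n%:R *+ j = u *+ 2.
  by rewrite /u -[_ *+ j]mulr_natr -[_ *+ 2]mulr_natr; field; exact: nR0.
rewrite /omega expiX hju.
rewrite /expi eq_complex /= negb_and; apply/orP; left.
rewrite cos_mulr2n; apply/eqP => h.
have hc : cos u ^+ 2 = 1.
  move: h; set c := cos u ^+ 2; rewrite mulr2n => h; lra.
have hs : sin u ^+ 2 = 0 by rewrite sin2cos2 hc subrr.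
have := sin_gt0_pi hu; move: hs => /eqP; rewrite sqrf_eq0 => /eqP ->.
by rewrite ltxx.
Qed.

Lemma prim_omega : n.-primitive_root (omega R n).
Proof.
apply/andP; split=> //; apply/forallP => i; rewrite unity_rootE.
have := ltn_ord i; rewrite leq_eqVlt => /orP[/eqP e|lt].
  by rewrite e omegan !eqxx.
have hne : omega R n ^+ i.+1 != 1 by apply: omega_ne1; rewrite lt.
rewrite (negbTE hne).
by rewrite eq_sym (ltn_eqF lt).
Qed.
End Cx.


Ltac ent2 := apply/matrixP; let i := fresh "i" in let j := fresh "j" in intros i j;
  case: (ord2P i) => ->; case: (ord2P j) => ->;
  rewrite /mA /mB !(mxE, lift01, ord0E) /=.

Theorem mainTheorem1 (R : realType) (n : nat) (hn3 : (3 <= n)%N) (hodd : odd n) :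
  (forall X : 'M[R[i]]_2,
     X ^+ n = (Cmat R) ^+ n <->
     exists (j : 'I_n) (k : 'I_n), X = Xmat R n j k) /\
  (forall j k j' k' : 'I_n, Xmat R n j k = Xmat R n j' k' -> j = j' /\ k = k').
Proof.
have hn0 : (0 < n)%N by apply: leq_trans hn3.
have [n' hn'] : exists n', n = n'.+1 by exists n.-1; rewrite prednK.
have hx0 := xi0 R; have hx1 := xi1 R; have hd := xid R; have h2 := two0 R.
set x := xi R in hx0 hx1 hd *.
set d := x - x^-1 in hd *.
set E := mE _ x; set F := mF _ x.
set s : R[i] := (-1) ^+ ((n + 1) %/ 2) / 'i.
set w := omega R n; set e := Defs.eta R n.
have hs0 : s != 0 by rewrite mulf_neq0 ?signr_eq0 // invr_eq0 i0.
have he0 : e != 0 by apply: expi_neq0.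
have hsn : s ^+ n = 'i by apply: sgn_pow.
have hen : e ^+ n = 'i by apply: etan.
have hwn : w ^+ n = 1 by apply: omegan.
have prim : n.-primitive_root w by apply: prim_omega.
have ii (y : R[i]) : 'i * y * 'i = - y.
  by rewrite mulrC mulrA -expr2 sqr_i mulN1r.
have dn : (- d) ^+ n = - d ^+ n by rewrite exprNn -signr_odd hodd expr1 mulN1r.
have pw (p q : R[i]) : (p *: E + q *: F) ^+ n = p ^+ n *: E + q ^+ n *: F.
  by rewrite hn' powEF.
have hC : Cmat R = (- d) *: E + d *: F.
  by rewrite (_ : Cmat R = mC _) // (@Cd _ x hx1 hd) scalerBr scaleNr addrC.
have XE (j k : nat) : Xmat R n j k = (s * d * (e * w ^+ j)) *: E + (s * d * (e^-1 * w ^+ k)) *: F.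
  rewrite /E /F mEdef mFdef !scalerA /Xmat -/x -/d; by ent2; rewrite -/x -/d -/s -/w -/e; field; rewrite ?hd ?he0 ?hx0.
clearbody s e w.
have hpow (j k : nat) : Xmat R n j k ^+ n = Cmat R ^+ n.
  rewrite XE hC !pw; congr (_ *: _ + _ *: _).
    rewrite !exprMn hsn hen -exprM mulnC exprM hwn expr1n mulr1 ii.
    by rewrite dn.
  rewrite !exprMn hsn exprVn hen -exprM mulnC exprM hwn expr1n mulr1 iinv.
  by rewrite mulrN ii opprK.
have hinj (j k j' k' : 'I_n) : Xmat R n j k = Xmat R n j' k' -> j = j' /\ k = k'.
  rewrite !XE => /(@EF_inj _ x hx0 hd) [h1 h2'].
  have hsd : s * d != 0 by rewrite mulf_neq0.
  move/(mulfI hsd)/(mulfI he0)/eqP: h1; rewrite (eq_prim_root_expr prim) !modn_small // => /eqP h1.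
  move/(mulfI hsd)/(mulfI (invr_neq0 he0))/eqP: h2'; rewrite (eq_prim_root_expr prim) !modn_small // => /eqP h2'.
  by split; apply: val_inj.
split => //.
move=> X; split; last by move=> [j [k ->]].
move=> hX.
have hcomm : X * Cmat R = Cmat R * X.
  have h1 : X * X ^+ n = X ^+ n * X by rewrite -exprS -exprSr.
  rewrite hX in h1.
  have hCn : Cmat R ^+ n = (d ^+ n / d) *: Cmat R := @Cpow _ x hx0 hx1 hd n hodd.
  rewrite hCn in h1.
  have hk : d ^+ n / d != 0 by rewrite mulf_neq0 ?expf_neq0 ?invr_eq0.
  exact: (@comm_scale _ _ X hk h1).
have hdec := @comm_decomp _ x hx0 hx1 hd h2 X hcomm.
set p := cA _ x X / d in hdec; set q := cB _ x X / d in hdec.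
move: hX; rewrite hdec pw hC pw => /(@EF_inj _ x hx0 hd) [hp hq].
clearbody p q.
have hz : (p / (s * d * e)) ^+ n = 1.
  rewrite expr_div_n !exprMn hp hsn hen ii dn divff // oppr_eq0 expf_neq0 //.
have [j hj] := prim_rootP prim hz.
have hz' : (q * e / (s * d)) ^+ n = 1.
  rewrite expr_div_n !exprMn hq hen hsn [_ * 'i]mulrC divff // mulf_neq0 ?i0 ?expf_neq0 //.
have [k hk] := prim_rootP prim hz'.
exists j, k; rewrite XE; congr (_ *: _ + _ *: _).
  by rewrite -hj; field; rewrite ?hs0 ?hd ?he0.
by rewrite -hk; field; rewrite ?hs0 ?hd ?he0.
Qed.
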